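(* Let $A \in \mathbb{R}^{m\times n}$ satisfy the strong null space property (sNSP) of order $s$ (defined in the context). Let $\mathbf{b} \in \mathbb{R}^m$ with $\mathbf{b} \neq \mathbf{0}$, and let $\mathbf{x} \in \mathbb{R}^n$ be an $s$-sparse vector (i.e. $\|\mathbf{x}\|_0 \le s$) with $A\mathbf{x} = \mathbf{b}$. Then $\mathbf{x}$ is a local minimizer of $\|\cdot\|_1/\|\cdot\|_2$ on the affine set $\{\mathbf{z} : A\mathbf{z} = \mathbf{b}\}$: there exists $t^* > 0$ such that for every $\mathbf{v} \in \ker(A)$ with $0 < \|\mathbf{v}\|_2 \le t^*$, $$\frac{\|\mathbf{x}\|_1}{\|\mathbf{x}\|_2} \le \frac{\|\mathbf{x}+\mathbf{v}\|_1}{\|\mathbf{x}+\mathbf{v}\|_2}.$$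
   Context: Notation: $[n] = \{1,\dots,n\}$. For $S \subset [n]$, $\bar S = [n]\setminus S$. For $\mathbf{x} \in \mathbb{R}^n$, $\mathbf{x}_S \in \mathbb{R}^n$ has entries $(\mathbf{x}_S)_i = x_i$ if $i \in S$ and $0$ otherwise. $\|\mathbf{x}\|_0$ is the number of nonzero entries of $\mathbf{x}$. $\ker(A) = \{\mathbf{x} : A\mathbf{x} = \mathbf{0}\}$. Definition (sNSP): $A \in \mathbb{R}^{m\times n}$ satisfies the strong null space property of order $s$ if $(s+1)\|\mathbf{v}_S\|_1 \le \|\mathbf{v}_{\bar S}\|_1$ for all $\mathbf{v} \in \ker(A)\setminus\{\mathbf{0}\}$ and all $S \subset [n]$ with $|S| \le s$. *)

(* Defs.v *)
(* Real numbers are modelled by an arbitrary real closed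
   field R (rcfType), which provides the square root needed for the l2 norm. *)
From HB Require Import structures.
From mathcomp Require Import all_boot all_order all_algebra.
Set Implicit Arguments. Unset Strict Implicit. Unset Printing Implicit Defensive.
Import Order.TTheory GRing.Theory Num.Theory.
Local Open Scope ring_scope.

Section Defs.
Variables (R : rcfType).

Definition norm1 n (x : 'cV[R]_n) : R := \sum_(i < n) `|x i 0|.

Definition norm2 n (x : 'cV[R]_n) : R := Num.sqrt (\sum_(i < n) x i 0 ^+ 2).

Definition restr n (S : {set 'I_n}) (x : 'cV[R]_n) : 'cV[R]_n :=
  \col_i (if i \in S then x i 0 else 0).

Definition norm0 n (x : 'cV[R]_n) : nat := #|[set i : 'I_n | x i 0 != 0]|.

Definition sNSP m n (A : 'M[R]_(m, n)) (s : nat) : Prop :=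
  forall v : 'cV[R]_n, A *m v = 0 -> v != 0 ->
  forall S : {set 'I_n}, (#|S| <= s)%N ->
    (s.+1)%:R * norm1 (restr S v) <= norm1 (restr (~: S) v).
End Defs.

(* Main.v *)
Require Import Defs.
From HB Require Import structures.
From mathcomp Require Import all_boot all_order all_algebra.
From mathcomp Require Import ring lra.
Import Order.TTheory GRing.Theory Num.Theory.
Local Open Scope ring_scope.

Lemma sqr_norm2 (R : rcfType) n (y : 'cV[R]_n) :
  norm2 y ^+ 2 = \sum_i y i 0 ^+ 2.
Proof. by rewrite /norm2 sqr_sqrtr // sumr_ge0 // => i _; rewrite sqr_ge0. Qed.

Lemma norm2_ge0 (R : rcfType) n (y : 'cV[R]_n) : 0 <= norm2 y.
Proof. by rewrite /norm2 sqrtr_ge0. Qed.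

Lemma term_le_sum (R : rcfType) n (f : 'I_n -> R) i :
  (forall j, 0 <= f j) -> f i <= \sum_j f j.
Proof.
move=> H; rewrite (bigD1 i) //= lerDl sumr_ge0 // => j _; exact: H.
Qed.

Arguments term_le_sum {R n} f i _.

Lemma norm2_gt0 (R : rcfType) n (y : 'cV[R]_n) : y != 0 -> 0 < norm2 y.
Proof.
move=> ny; case: (boolP [exists i, y i 0 != 0]) => [/existsP [i Hi]|H].
  rewrite /norm2 sqrtr_gt0.
  have h := term_le_sum (fun j => y j 0 ^+ 2) i (fun j => sqr_ge0 _).
  apply: lt_le_trans h; by rewrite /= lt_neqAle sqr_ge0 andbT eq_sym sqrf_eq0.
case/negP: ny; apply/eqP/matrixP => i j; rewrite ord1 !mxE.
by apply/eqP; apply: contraNT H => Hi; apply/existsP; exists i.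
Qed.

Lemma abs_le_norm2 (R : rcfType) n (y : 'cV[R]_n) i : `|y i 0| <= norm2 y.
Proof.
rewrite -sqrtr_sqr /norm2 ler_sqrt; last by rewrite sumr_ge0 // => j _; rewrite sqr_ge0.
by apply: term_le_sum => j; rewrite sqr_ge0.
Qed.

Arguments abs_le_norm2 {R n} y i.

Theorem theorem2p1 (R : rcfType) (m n s : nat) (A : 'M[R]_(m, n))
  (b : 'cV[R]_m) (x : 'cV[R]_n) :
  sNSP A s -> b != 0 -> (norm0 x <= s)%N -> A *m x = b ->
  exists t : R, 0 < t /\
    forall v : 'cV[R]_n, A *m v = 0 -> 0 < norm2 v -> norm2 v <= t ->
      norm1 x / norm2 x <= norm1 (x + v) / norm2 (x + v).
Proof.
move=> hN hb hs hAx.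
have nx : x != 0 by apply/eqP => hx; move: hb; rewrite -hAx hx mulmx0 eqxx.
set S := [set i : 'I_n | x i 0 != 0].
have [i0 Hi0] : exists i, x i 0 != 0.
  case: (boolP [exists i, x i 0 != 0]) => [/existsP [i Hi]|H]; first by exists i.
  case/negP: nx; apply/eqP/matrixP => i j; rewrite ord1 !mxE.
  by apply/eqP; apply: contraNT H => Hi; apply/existsP; exists i.
have s1 : (1 <= s)%N.
  apply: leq_trans hs; rewrite /norm0 card_gt0; apply/set0Pn; exists i0.
  by rewrite inE.
set a := norm1 x.
set c2 := \sum_i x i 0 ^+ 2.
have c2gt0 : 0 < c2 by rewrite /c2 -sqr_norm2 exprn_gt0 // norm2_gt0.
have agt0 : 0 < a.
  have h := term_le_sum (fun i => `|x i 0|) i0 (fun j => normr_ge0 _).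
  by apply: lt_le_trans h; rewrite /= normr_gt0.
have hax : forall i, 2 * (a * `|x i 0|) <= s.+1%:R * c2.
  move=> i.
  have -> : 2 * (a * `|x i 0|) = \sum_j (2 * (`|x j 0| * `|x i 0|)).
    by rewrite /a /norm1 mulr_suml mulr_sumr.
  have xic : x i 0 ^+ 2 <= c2 by apply: term_le_sum => j; rewrite sqr_ge0.
  apply: (le_trans (y := \sum_j (x j 0 ^+ 2 + (if j \in S then x i 0 ^+ 2 else 0)))).
    apply: ler_sum => j _; rewrite inE; case: ifP => Hj.
      have e1 : `|x j 0| ^+ 2 = x j 0 ^+ 2 by rewrite real_normK ?num_real.
      have e2 : `|x i 0| ^+ 2 = x i 0 ^+ 2 by rewrite real_normK ?num_real.
      have := sqr_ge0 (`|x j 0| - `|x i 0|); rewrite -e1 -e2; nra.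
    move/negbFE: Hj => /eqP ->; rewrite normr0 mul0r mulr0 expr0n /= addr0.
    by rewrite le_refl.
  rewrite big_split /= -big_mkcond sumr_const /= -/c2 -[_ *+ #|S|]mulr_natl.
  have : (#|S|%:R : R) <= s%:R by rewrite ler_nat.
  have -> : (s.+1%:R : R) = s%:R + 1 by rewrite -addn1 natrD.
  have : 0 <= (#|S|%:R : R) by [].
  nra.
exists (c2 / (2 * a)); split; first by rewrite divr_gt0 // mulr_gt0.
move=> v hAv nvgt0 nvle.
set nv := norm2 v in nvgt0 nvle.
have vne : v != 0 by apply/eqP => hv; move: nvgt0; rewrite /nv hv /norm2 big1 ?sqrtr0 ?ltxx // => i _; rewrite mxE expr0n.
set p := \sum_i (if x i 0 != 0 then `|v i 0| else 0).
set q := \sum_i (if x i 0 != 0 then 0 else `|v i 0|).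
have hpq : s.+1%:R * p <= q.
  have := hN v hAv vne S hs; rewrite /norm1.
  have -> : \sum_i `|restr S v i 0| = p by apply: eq_bigr => i _; rewrite mxE inE; case: ifP; rewrite ?normr0.
  have -> : \sum_i `|restr (~: S) v i 0| = q by apply: eq_bigr => i _; rewrite mxE in_setC inE if_neg; case: ifP; rewrite ?normr0.
  by [].
have p0 : 0 <= p by rewrite sumr_ge0 // => i _; case: ifP.
have q0 : 0 <= q by rewrite sumr_ge0 // => i _; case: ifP.
have sp : 2%:R <= (s.+1%:R : R) by rewrite ler_nat ltnS.
have pq : p <= q by nra.
set X := \sum_i x i 0 * v i 0.
set w := \sum_i v i 0 ^+ 2.
set u := \sum_i Num.sg (x i 0) * v i 0.
set N1 := norm1 (x + v).
have hN1 : a + u + q <= N1.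
  rewrite /N1 /norm1 /a /norm1 /u /q -!big_split /=; apply: ler_sum => i _; rewrite !mxE.
  case: ifP => Hx.
    have h1 := ler_norm (x i 0 + v i 0); have h2 := ler_norm (- (x i 0 + v i 0)).
    rewrite normrN in h2.
    case: (ltrgtP (x i 0) 0) => Hs.
    - rewrite ltr0_sg // ltr0_norm //; lra.
    - rewrite gtr0_sg // gtr0_norm //; lra.
    - by rewrite Hs eqxx in Hx.
  by move/negbFE: Hx => /eqP ->; rewrite sgr0 normr0 mul0r !add0r.
have hu : - p <= u.
  rewrite /u /p -sumrN; apply: ler_sum => i _; case: ifP => Hx.
    have h1 := ler_norm (v i 0); have h2 := ler_norm (- v i 0); rewrite normrN in h2.
    case: (ltrgtP (x i 0) 0) => Hs.
    - rewrite ltr0_sg //; lra.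
    - rewrite gtr0_sg //; lra.
    - by rewrite Hs eqxx in Hx.
  by move/negbFE: Hx => /eqP ->; rewrite sgr0 mul0r oppr0.
have hw : w <= nv * (p + q).
  rewrite /w /p /q -big_split mulr_sumr /=; apply: ler_sum => i _.
  have e : v i 0 ^+ 2 = `|v i 0| * `|v i 0| by rewrite -expr2 real_normK ?num_real.
  have h := abs_le_norm2 v i.
  case: ifP => _; rewrite ?add0r ?addr0 e; exact: ler_wpM2r.
have hc2 : norm2 x ^+ 2 = c2 by rewrite sqr_norm2.
clearbody a c2.
have hF1 : 2 * (a ^+ 2 * X - a * c2 * u) <= a * s.+1%:R * c2 * p.
  rewrite /X /u /p !mulr_sumr -sumrB mulr_sumr; apply: ler_sum => i _.
  case: ifP => Hx; last first.
    by move/negbFE: Hx => /eqP ->; rewrite sgr0 !mul0r !mulr0 subrr mulr0.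
  have hy : 2 * `|a * x i 0 - c2 * Num.sg (x i 0)| <= s.+1%:R * c2.
    have := hax i.
    case: (ltrgtP (x i 0) 0) => Hs.
    - rewrite ltr0_sg // ltr0_norm // => h.
      have sc : c2 <= s.+1%:R * c2 / 2 by nra.
      have : `|a * x i 0 - c2 * -1| <= s.+1%:R * c2 / 2.
        rewrite ler_norml; apply/andP; split; nra.
      lra.
    - rewrite gtr0_sg // gtr0_norm // => h.
      have sc : c2 <= s.+1%:R * c2 / 2 by nra.
      have : `|a * x i 0 - c2 * 1| <= s.+1%:R * c2 / 2.
        rewrite ler_norml; apply/andP; split; nra.
      lra.
    - by rewrite Hs eqxx in Hx.
  set y := a * x i 0 - c2 * Num.sg (x i 0) in hy.
  have e : 2 * (a ^+ 2 * (x i 0 * v i 0) - a * c2 * (Num.sg (x i 0) * v i 0)) = a * (v i 0 * (2 * y)) by rewrite /y; ring.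
  rewrite e.
  have h1 : v i 0 * (2 * y) <= `|v i 0| * (s.+1%:R * c2).
    apply: (le_trans (ler_norm _)); rewrite normrM; apply: ler_wpM2l => //.
    by rewrite normrM ger0_norm.
  have := ltW agt0; nra.
have cgt0 : 0 < norm2 x by rewrite norm2_gt0.
have xvne : x + v != 0.
  by apply/eqP => hxv; move: hb; rewrite -hAx -[x](addrK v) hxv sub0r mulmxN hAv oppr0 eqxx.
have N2gt0 : 0 < norm2 (x + v) by rewrite norm2_gt0.
have hN2 : norm2 (x + v) ^+ 2 = c2 + 2 * X + w.
  rewrite sqr_norm2 /X /w.
  have -> : \sum_i (x + v) i 0 ^+ 2 = \sum_i (x i 0 ^+ 2 + (2 * (x i 0 * v i 0) + v i 0 ^+ 2)).
    by apply: eq_bigr => i _; rewrite mxE; ring.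
  rewrite big_split big_split /= -mulr_sumr -hc2 sqr_norm2 addrA.
  by [].
rewrite ler_pdivlMr // mulrAC ler_pdivrMr //.
have L0 : 0 <= a + u + q by lra.
have hL2 : (a + u + q) ^+ 2 <= N1 ^+ 2 by rewrite ler_sqr ?nnegrE //; lra.
rewrite -ler_sqr ?nnegrE; last 2 first.
- by rewrite mulr_ge0 // ?norm2_ge0 // ltW.
- by rewrite mulr_ge0 // ?norm2_ge0 //; lra.
rewrite !exprMn hN2 hc2.
rewrite ler_pdivlMr ?mulr_gt0 // in nvle.
have hF1' : 2 * (a ^+ 2 * X) <= 2 * a * c2 * u + a * c2 * q.
  have : a * c2 * (s.+1%:R * p) <= a * c2 * q by rewrite ler_wpM2l // mulr_ge0 // ltW.
  nra.
have hw' : a ^+ 2 * w <= a * c2 * q.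
  have h1 : a ^+ 2 * w <= a ^+ 2 * (nv * (p + q)) by rewrite ler_wpM2l // sqr_ge0.
  have h2 : a ^+ 2 * (nv * (p + q)) <= a ^+ 2 * (nv * (2 * q)).
    apply: ler_wpM2l; first exact: sqr_ge0.
    apply: ler_wpM2l; first exact: ltW nvgt0.
    lra.
  have h3 : a * q * (nv * (2 * a)) <= a * q * c2 by rewrite ler_wpM2l // mulr_ge0 // ltW.
  have e : a ^+ 2 * (nv * (2 * q)) = a * q * (nv * (2 * a)) by ring.
  lra.
have h4 : 0 <= c2 * (u + q) ^+ 2 by rewrite mulr_ge0 ?sqr_ge0 // ltW.
have h5 : c2 * (a + u + q) ^+ 2 <= c2 * N1 ^+ 2 by rewrite ler_wpM2l // ltW.
nra.
Qed.
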